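(* Let $p>q\geq 2$ be relatively prime integers with $p\geq 2q-1$. For every $d\in A_q$ let $k_d\in A_p$ and $j_d\in A_q$ be the unique elements with $k_dq\equiv d\pmod p$ and $k_dq=j_dp+d$. If $wab\in L(q,p)$ for some word $w$ over $A_{pq}$ and digits $a,b\in A_{pq}$ with $a\equiv k_d\pmod p$, then $b\equiv j_d\pmod q$.
   Context: For an integer $n>1$, $A_n=\{0,1,\dots,n-1\}$. For relatively prime integers $r,s\geq2$ define $g_{r,s}:A_{rs}\times A_{rs}\to A_{rs}$ by writing $x=x_1s+x_0$, $y=y_1s+y_0$ with $x_0,y_0\in A_s$, $x_1,y_1\in A_r$ (uniquely), and $g_{r,s}(x,y)=x_0r+y_1$; and $F_{r,s}:A_{rs}^{\mathbb{Z}}\to A_{rs}^{\mathbb{Z}}$ by $F_{r,s}(c)(i)=g_{r,s}(g_{r,s}(c(i-1),c(i)),g_{r,s}(c(i),c(i+1)))$. $F_{r,s}$ is a bijection with inverse $F_{s,r}$, so $F_{r,s}^n$ is defined for $n\in\mathbb{Z}$. The trace is $\mathrm{tr}_{r,s}(c)=(F_{r,s}^n(c)(1))_{n\in\mathbb{Z}}$, and $L(r,s)$ is the set of all finite words $u(1)\cdots u(m)$ ($m\geq0$) over $A_{rs}$ such that for some $c\in A_{rs}^{\mathbb{Z}}$ and $n_0\in\mathbb{Z}$ we have $u(j)=\mathrm{tr}_{r,s}(c)(n_0+j)$ for $1\leq j\leq m$. Here $L(q,p)$ refers to traces with respect to $F_{q,p}$. *)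

(* Defs.v *)
From mathcomp Require Import all_boot all_order all_algebra.
Set Implicit Arguments. Unset Strict Implicit. Unset Printing Implicit Defensive.
Import GRing.Theory Num.Theory.

(* Configurations c : Z -> A_n are functions int -> nat; validity (values < n)
   is imposed separately where needed. *)
Definition config := int -> nat.

Definition valid_config (n : nat) (c : config) : Prop := forall i : int, c i < n.

Definition g (r s : nat) (x y : nat) : nat := (x %% s) * r + y %/ s.

Definition F (r s : nat) (c : config) : config :=
  fun i => g r s (g r s (c (i - 1)%R) (c i)) (g r s (c i) (c (i + 1)%R)).

(* F_{r,s}^n for n in Z, with F_{r,s}^{-1} = F_{s,r}. *)
Definition Fpow (r s : nat) (n : int) (c : config) : config :=
  match n with
  | Posz m => iter m (F r s) c
  | Negz m => iter m.+1 (F s r) c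
  end.

Definition tr (r s : nat) (c : config) (n : int) : nat := Fpow r s n c 1%R.

(* L(r,s): finite words u(1)...u(m) that occur in some trace:
   u(j) = tr_{r,s}(c)(n0 + j) for 1 <= j <= m. Words are 0-indexed seqs. *)
Definition inL (r s : nat) (u : seq nat) : Prop :=
  exists c : config, valid_config (r * s) c /\
  exists n0 : int, forall j : nat, j < size u ->
    nth 0 u j = tr r s c (n0 + (j.+1)%:Z)%R.

(* Main.v *)
Require Import Defs.
From mathcomp Require Import all_boot all_order all_algebra zify.
Import GRing.Theory.

Lemma fwd p q d k j c0 c1 c2 : 0 < p -> 0 < q -> 2 * q - 1 <= p -> d < q -> k < p ->
  k * q = j * p + d -> c2 < p * q -> c1 %% p = k ->
  g q p (g q p c0 c1) (g q p c1 c2) %% q = j %% q.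
Proof.
move=> p0 q0 hp hd hk hkj hc2 hc1.
rewrite /g hc1 modnMDl.
have e2 : c2 %/ p < q by rewrite ltn_divLR // mulnC.
rewrite hkj -addnA divnMDl // divn_small ?addn0 //; lia.
Qed.

Lemma bwd p q d k j c0 c1 c2 : 0 < p -> 0 < q -> 2 * q - 1 <= p -> d < q -> k < p -> j < q ->
  k * q = j * p + d -> c2 < p * q ->
  g p q (g p q c0 c1) (g p q c1 c2) %% p = k %% p -> c1 %% q = j %% q.
Proof.
move=> p0 q0 hp hd hk hj hkj hc2.
rewrite /g modnMDl.
set t := c1 %% q. set e := c2 %/ q.
have ht : t < q by rewrite ltn_mod.
have he : e < p by rewrite ltn_divLR.
have hv : t * p + e < q * p.
  have : t * p + e < t * p + p by rewrite ltn_add2l.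
  move=> h; apply: (leq_trans h). rewrite addnC -mulSn. by rewrite leq_mul2r ht orbT.
have hvq : (t * p + e) %/ q < p by rewrite ltn_divLR // [p * q]mulnC.
rewrite (modn_small hvq) (modn_small hk) => hk'.
have h1 := divn_eq (t * p + e) q. rewrite hk' in h1.
have h2 : (t * p + e) %% q < q by rewrite ltn_mod.
move: h1 h2; set r := (t * p + e) %% q => h1 h2.
rewrite (modn_small hj).
have : t = j.
  case: (ltngtP t j) => // htj.
  - have : (t.+1) * p <= j * p by rewrite leq_mul2r htj orbT.
    nia.
  - have : (j.+1) * p <= t * p by rewrite leq_mul2r htj orbT.
    nia.
by [].
Qed.
Lemma FposS r s c n : Fpow r s (Posz n + 1)%R c = F r s (iter n (F r s) c).
Proof. have -> : (Posz n + 1)%R = Posz n.+1 by rewrite -addn1 PoszD. by []. Qed.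
Lemma FnegS r s c n : Fpow r s (Negz n + 1)%R c = iter n (F s r) c.
Proof.
case: n => [|n] //.
have -> : (Negz n.+1 + 1)%R = Negz n by rewrite !NegzE; lia.
by [].
Qed.
Lemma g_lt r s x y : 0 < r -> 0 < s -> y < r * s -> g r s x y < r * s.
Proof.
move=> r0 s0 hy. rewrite /g.
have h1 : y %/ s < r by rewrite ltn_divLR.
have h2 : x %% s < s by rewrite ltn_mod.
nia.
Qed.
Lemma F_valid r s c : 0 < r -> 0 < s -> valid_config (r * s) c -> valid_config (r * s) (F r s c).
Proof. move=> r0 s0 hc i. rewrite /F. by apply: g_lt => //; apply: g_lt. Qed.
Lemma iter_valid r s c n : 0 < r -> 0 < s -> valid_config (r * s) c -> valid_config (r * s) (iter n (F r s) c).
Proof. move=> r0 s0 hc; elim: n => //= n IH; exact: F_valid. Qed.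

Theorem lemma5 (p q : nat) (hq : 2 <= q) (hqp : q < p) (hcop : coprime p q)
  (hp : 2 * q - 1 <= p)
  (d k j : nat) (hd : d < q) (hk : k < p) (hj : j < q)
  (hkmod : k * q = d %[mod p]) (hkj : k * q = j * p + d)
  (w : seq nat) (a b : nat)
  (hw : all (fun x => x < p * q) w) (ha : a < p * q) (hb : b < p * q)
  (hL : inL q p (w ++ [:: a; b]))
  (hak : a = k %[mod p]) :
  b = j %[mod q].
Proof.
have p0 : 0 < p by lia.
have q0 : 0 < q by lia.
case: hL => c [hc [n0 H]].
have Ha := H (size w). have Hb := H (size w).+1.
rewrite nth_cat ltnn subnn /= size_cat /= in Ha.
rewrite nth_cat (_ : (size w).+1 < size w = false) ?subSn ?subnn /= ?size_cat /= in Hb; last by lia.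
have {}Ha := Ha ltac:(lia). have {}Hb := Hb ltac:(lia).
have E : (n0 + (size w).+2%:Z = (n0 + (size w).+1%:Z) + 1)%R.
  by rewrite -addrA -PoszD addn1.
rewrite E in Hb. move: Ha Hb.
rewrite /tr. case: (n0 + (size w).+1%:Z)%R => n.
- rewrite FposS /= => Ha' ->; rewrite Ha' in hak.
  rewrite /F. apply: (@fwd p q d k j _ _ _ p0 q0 hp hd hk hkj).
  + have := @iter_valid q p c n q0 p0 hc. rewrite mulnC. by apply.
  + by rewrite hak modn_small.
- rewrite FnegS /= => Ha' Hb'; rewrite Ha' /F in hak; rewrite Hb'.
  apply: (@bwd p q d k j _ _ _ p0 q0 hp hd hk hj hkj _ hak).
  have hc' : valid_config (p * q) c by rewrite mulnC.
  by apply: (@iter_valid p q c n p0 q0 hc').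
- by [].
Qed.
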